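(* Let $1\le b<\frac{n}{2}-1$, and let $T$ be a tree attaining the maximum value of $M_1$ over $\mathcal{CT}^*_{n,b}$, or a tree attaining the maximum value of $M_2$ over $\mathcal{CT}^*_{n,b}$. Then $T$ has a vertex of degree $2$ (i.e. $n_2>0$) if and only if $b<\frac{n-2}{3}$.
   Context: A chemical tree is a tree with maximum degree at most $4$. A branching vertex is a vertex of degree greater than $2$. $\mathcal{CT}^*_{n,b}$ is the class of all $n$-vertex chemical trees with exactly $b$ branching vertices. $n_2$ denotes the number of vertices of degree $2$. $M_1(G)=\sum_v d_v^2$ and $M_2(G)=\sum_{uv\in E(G)}d_ud_v$, where $d_v$ is the degree of $v$. *)

(* Defs.v *)
From mathcomp Require Import all_boot.
Set Implicit Arguments. Unset Strict Implicit. Unset Printing Implicit Defensive.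

Definition simple_graph n (e : rel 'I_n) : Prop :=
  irreflexive e /\ symmetric e.

Definition deg n (e : rel 'I_n) (v : 'I_n) : nat := #|[set u | e v u]|.

Definition edges n (e : rel 'I_n) : {set 'I_n * 'I_n} :=
  [set p : 'I_n * 'I_n | (p.1 < p.2) && e p.1 p.2].

Definition is_tree n (e : rel 'I_n) : Prop :=
  simple_graph e /\ (forall x y, connect e x y) /\ #|edges e| = n.-1.

Definition chemical_tree n (e : rel 'I_n) : Prop :=
  is_tree e /\ forall v, deg e v <= 4.

Definition nbranch n (e : rel 'I_n) : nat := #|[set v | 2 < deg e v]|.

Definition n2 n (e : rel 'I_n) : nat := #|[set v | deg e v == 2]|.

Definition in_CT n b (e : rel 'I_n) : Prop := chemical_tree e /\ nbranch e = b.

Definition M1 n (e : rel 'I_n) : nat := \sum_(v : 'I_n) deg e v ^ 2.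
Definition M2 n (e : rel 'I_n) : nat :=
  \sum_(p in edges e) deg e p.1 * deg e p.2.

Definition is_max_CT n b (f : rel 'I_n -> nat) (e : rel 'I_n) : Prop :=
  in_CT b e /\ forall e' : rel 'I_n, in_CT b e' -> f e' <= f e.

(* Main.v *)
Require Import Defs.
From mathcomp Require Import all_boot zify.
Set Implicit Arguments. Unset Strict Implicit. Unset Printing Implicit Defensive.


Lemma crossing n (e : rel 'I_n) (S : {set 'I_n}) r u :
  connect e r u -> r \in S -> u \notin S ->
  exists a b, [/\ a \in S, b \notin S & e a b].
Proof.
move=> /connectP [p Hp ->]; elim: p r Hp => [|c p IH] r /=.
  by move=> _ ->.
case/andP=> erc Hp rS uS.
case: (boolP (c \in S)) => cS; first exact: IH Hp cS uS.
by exists r, c.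
Qed.

Lemma edges_lb n (e : rel 'I_n) :
  symmetric e -> (forall a b, connect e a b) -> n.-1 <= #|edges e|.
Proof.
move=> esym econ; case: n e esym econ => [//|n'] e esym econ /=.
suff: forall k, k <= n' -> exists (S : {set 'I_n'.+1}) (F : {set 'I_n'.+1 * 'I_n'.+1}),
  [/\ #|S| = k.+1, F \subset edges e, #|F| = k &
     forall p, p \in F -> (p.1 \in S) && (p.2 \in S)].
  case/(_ n' (leqnn _)) => S [F [_ sF cF _]]; by rewrite -[X in X <= _]cF; exact: subset_leq_card.
elim=> [|k IH] lek.
  exists [set ord0], set0; split; rewrite ?cards1 ?cards0 ?sub0set //.
  by move=> p; rewrite in_set0.
have [S [F [cS sF cF inF]]] := IH (ltnW lek).
have [u uS] : exists u, u \notin S.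
  apply/existsP; rewrite -negb_forall; apply/negP => /forallP allS.
  have : #|S| = n'.+1.
    have -> : S = setT by apply/setP => z; rewrite inE allS.
    by rewrite cardsT card_ord.
  lia.
have [r rS] : exists r, r \in S.
  by apply/set0Pn; rewrite -card_gt0 cS.
have [a [b [aS bS eab]]] := crossing (econ r u) rS uS.
have ab : a != b by apply: contraNneq bS => <-.
pose p := if a < b then (a, b) else (b, a).
have pE : p \in edges e.
  rewrite inE /p; case: ifP => H /=; first by rewrite H eab.
  rewrite esym eab andbT ltn_neqAle eq_sym ab /=; rewrite leqNgt H //.
have pF : p \notin F.
  apply/negP => /inF; rewrite /p; case: ifP => _ /= /andP[]; by rewrite (negbTE bS) // andbF.
exists (b |: S), (p |: F); split.
- by rewrite cardsU1 bS cS.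
- by rewrite subUset sub1set pE sF.
- by rewrite cardsU1 pF cF.
- move=> q; rewrite in_setU1 => /orP [/eqP -> | /inF /andP [H1 H2]].
    by rewrite /p; case: ifP => _ /=; rewrite !in_setU1 eqxx aS ?orbT.
  by rewrite !in_setU1 H1 H2 !orbT.
Qed.


Lemma deg_sum n (e : rel 'I_n) u : deg e u = \sum_b (e u b : nat).
Proof.
rewrite /deg -sum1_card big_mkcond /=; apply: eq_bigr => b _; rewrite inE; by case: (e u b).
Qed.

Lemma sum_eq1 n (w : 'I_n) c : \sum_i (i == w) * c = c.
Proof. by rewrite (bigD1 w) //= eqxx mul1n big1 ?addn0 // => i /negbTE ->. Qed.

Lemma sum_eq1' n (w : 'I_n) (F : 'I_n -> nat) : \sum_i (i == w) * F i = F w.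
Proof. by rewrite (bigD1 w) //= eqxx mul1n big1 ?addn0 // => i /negbTE ->. Qed.

Definition swp n (p : 'I_n * 'I_n) := (p.2, p.1).
Lemma swp_inj n : injective (@swp n).
Proof. by case=> a b [c d] [-> ->]. Qed.

Lemma pair_edges n (e : rel 'I_n) (F : 'I_n -> 'I_n -> nat) :
  symmetric e -> irreflexive e ->
  \sum_a \sum_b e a b * F a b = \sum_(p in edges e) (F p.1 p.2 + F p.2 p.1).
Proof.
move=> esym eirr; rewrite pair_big /= big_split /=.
rewrite (bigID (fun p : 'I_n * 'I_n => p.1 < p.2)) /=; congr (_ + _).
  rewrite big_mkcond [RHS]big_mkcond; apply: eq_bigr => [[a b]] _ /=.
  rewrite inE /=; case: (a < b) => //=; by case: (e a b); rewrite ?mul1n ?mul0n.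
rewrite big_mkcond [RHS]big_mkcond (reindex_inj (@swp_inj n)) /=.
apply: eq_bigr => [[a b]] _ /=; rewrite inE /=.
case: (ltngtP a b) => H /=.
- by rewrite esym; case: (e a b); rewrite ?mul1n ?mul0n.
- by [].
- have -> : a = b by apply: val_inj.
  by rewrite eirr.
Qed.

Lemma handshake n (e : rel 'I_n) : symmetric e -> irreflexive e ->
  \sum_u deg e u = 2 * #|edges e|.
Proof.
move=> esym eirr.
transitivity (\sum_a \sum_b e a b * (fun _ _ => 1) a b).
  by apply: eq_bigr => a _; rewrite deg_sum; apply: eq_bigr => b _; rewrite muln1.
by rewrite pair_edges // -sum1_card big_distrr /= mul2n; apply: eq_bigr => p _; rewrite addnn.
Qed.

Lemma M2_sum n (e : rel 'I_n) : symmetric e -> irreflexive e ->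
  \sum_a \sum_b e a b * (deg e a * deg e b) = 2 * M2 e.
Proof.
move=> esym eirr; rewrite pair_edges // /M2 big_distrr /=; apply: eq_bigr => p _.
by rewrite mulnC addnn mul2n.
Qed.


Lemma connect_map n (e e' : rel 'I_n) (h : 'I_n -> 'I_n) :
  (forall a b, e a b -> connect e' (h a) (h b)) ->
  forall a b, connect e a b -> connect e' (h a) (h b).
Proof.
move=> He a b /connectP [p Hp ->]; elim: p a Hp => [|c p IH] a /=.
  by move=> _; exact: connect0.
case/andP=> eac Hp; apply: connect_trans (He _ _ eac) (IH _ Hp).
Qed.

Lemma no_triangle n (e : rel 'I_n) x v y :
  is_tree e -> e x v -> e v y -> x != y -> x != v -> y != v -> ~~ e x y.
Proof.
move=> [[eirr esym] [econ ecard]] exv evy xy xv yv; apply/negP => exy.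
pose e0 : rel 'I_n := fun a b => e a b && ~~ (((a == x) && (b == y)) || ((a == y) && (b == x))).
have e0sym : symmetric e0.
  move=> a b; rewrite /e0 esym; by case: (a == x); case: (a == y); case: (b == x); case: (b == y).
have e0con : forall a b, connect e0 a b.
  move=> a b; apply: (connect_sub _ (econ a b)) => c d ecd.
  case: (boolP (((c == x) && (d == y)) || ((c == y) && (d == x)))) => H.
    have e0xv : e0 x v by rewrite /e0 exv eqxx /= (negbTE xy) (eq_sym v) (negbTE yv) ?andbF ?andbT ?orbF.
    have e0vy : e0 v y by rewrite /e0 evy (eq_sym v) (negbTE xv) (eq_sym v) (negbTE yv) ?andbF ?andbT ?orbF.
    have Hxy : connect e0 x y := connect_trans (connect1 e0xv) (connect1 e0vy).
    case/orP: H => /andP [/eqP -> /eqP ->] //.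
    by rewrite (sym_connect_sym e0sym).
  by apply: connect1; rewrite /e0 ecd H.
have := edges_lb e0sym e0con.
have : edges e0 \proper edges e.
  apply/properP; split.
    by apply/subsetP => p; rewrite !inE /e0 => /andP [-> /andP [-> _]].
  exists (if x < y then (x, y) else (y, x)).
    rewrite inE; case: ifP => H /=; first by rewrite H exy.
    rewrite esym exy andbT ltn_neqAle leqNgt H andbT; by rewrite eq_sym.
  by rewrite inE /e0; case: ifP => _ /=; rewrite !eqxx ?orbT !andbF.
move/proper_card; rewrite ecard; lia.
Qed.

Lemma deg_pos n (e : rel 'I_n) u : is_tree e -> 1 < n -> 0 < deg e u.
Proof.
move=> [[eirr esym] [econ ecard]] n1.
have [u' uu'] : exists u' : 'I_n, u' != u.
  have n0 : 0 < n by lia.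
  case: (eqVneq (Ordinal n0) u) => H; last by exists (Ordinal n0).
  exists (Ordinal n1); apply/eqP => H'; have := congr1 val (etrans H (Logic.eq_sym H')); by [].
have u'S : u' \notin [set u] by rewrite in_set1.
have [a [b [aS bS eab]]] := crossing (econ u u') (set11 u) u'S.
move: aS; rewrite in_set1 => /eqP au; subst a.
rewrite /deg card_gt0; apply/set0Pn; exists b; by rewrite inE eab.
Qed.

Lemma sum_ind n (P : pred 'I_n) : \sum_i (P i : nat) = #|[set i | P i]|.
Proof.
rewrite -sum1_card [RHS]big_mkcond /=; apply: eq_bigr => b _; rewrite inE; by case: (P b).
Qed.

Lemma sum_mulc n c (f : 'I_n -> nat) : \sum_i c * f i = c * \sum_i f i.
Proof. by rewrite big_distrr. Qed.

Lemma count_deg n (e : rel 'I_n) :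
  is_tree e -> 1 < n -> (forall u, deg e u <= 4) ->
  n <= 3 * nbranch e + n2 e + 2 /\
  ((forall u, deg e u != 3) -> 3 * nbranch e + n2 e + 2 <= n).
Proof.
move=> T n1 d4.
have [[eirr esym] [econ ecard]] := T.
have hs := handshake esym eirr; rewrite ecard in hs.
have nE : n = \sum_(u : 'I_n) 1 by rewrite sum1_card card_ord.
have bE : nbranch e = \sum_u ((2 < deg e u) : nat) by rewrite sum_ind.
have cE : n2 e = \sum_u ((deg e u == 2) : nat) by rewrite sum_ind.
split.
  have : \sum_u deg e u <= \sum_u (3 * (2 < deg e u)) + \sum_u (deg e u == 2) + \sum_(u : 'I_n) 1.
    rewrite -!big_split; apply: leq_sum => u _; have := d4 u; have := deg_pos u T n1.
    case: (deg e u) => [|[|[|[|[|k]]]]] //.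
  rewrite hs sum_mulc -bE -cE -nE; lia.
move=> no3.
have : \sum_u (3 * (2 < deg e u)) + \sum_u (deg e u == 2) + \sum_(u : 'I_n) 1 <= \sum_u deg e u.
  rewrite -!big_split; apply: leq_sum => u _; have := d4 u; have := deg_pos u T n1; have := no3 u.
  case: (deg e u) => [|[|[|[|[|k]]]]] //.
rewrite hs sum_mulc -bE -cE -nE; lia.
Qed.


Lemma bool_m2_0 (Av Aw Ax Ay Bv Bw Bx By E : bool) (da db : nat) :
  [&& ~~ (Av && Aw), ~~ (Av && Ax), ~~ (Av && Ay), ~~ (Ax && Ay),
      ~~ (Bv && Bw), ~~ (Bv && Bx), ~~ (Bv && By), ~~ (Bx && By),
      (E ==> ~~ [|| Av && Bv, Aw && Bw, Ax && Bx, Ay && By, Ax && By | Ay && Bx]),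
      (Av ==> (E == (Bx || By))) & (Bv ==> (E == (Ax || Ay)))] ->
  ~~ (Aw && Ax) -> ~~ (Aw && Ay) -> ~~ (Bw && Bx) -> ~~ (Bw && By) ->
  (Av -> da = 2) -> (Aw -> da = 3) -> (Bv -> db = 2) -> (Bw -> db = 3) ->
  1 <= da <= 4 -> 1 <= db <= 4 ->
  E * (da * db) + (Av && Bw) * 4 + (Aw && Bv) * 4 + (Ax && By) * ((if Av then 1 else if Aw then 4 else da) * (if Bv then 1 else if Bw then 4 else db)) + (Ay && Bx) * ((if Av then 1 else if Aw then 4 else da) * (if Bv then 1 else if Bw then 4 else db))
    + Aw * (~~ Bv && E) + Bw * (~~ Av && E)
  <= [|| Av && Bw, Aw && Bv | (~~Av && ~~Bv && [|| E, Ax && By | Ay && Bx])] * ((if Av then 1 else if Aw then 4 else da) * (if Bv then 1 else if Bw then 4 else db)) + Av * (E * (da * db)) + Bv * (E * (da * db)).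
Proof.
case: Av; case: Aw; case: Ax; case: Ay; case: Bv; case: Bw; case: Bx; case: By; case: E; rewrite //= => _;
  move=> *; nia.
Qed.

Lemma bool_m2_x (Av Ax Ay Bv Bx By E : bool) (da db : nat) :
  [&& ~~ (Av && Ax), ~~ (Av && Ax), ~~ (Av && Ay), ~~ (Ax && Ay),
      ~~ (Bv && Bx), ~~ (Bv && Bx), ~~ (Bv && By), ~~ (Bx && By),
      (E ==> ~~ [|| Av && Bv, Ax && Bx, Ax && Bx, Ay && By, Ax && By | Ay && Bx]),
      (Av ==> (E == (Bx || By))) & (Bv ==> (E == (Ax || Ay)))] ->
  (Av -> da = 2) -> (Ax -> da = 3) -> (Bv -> db = 2) -> (Bx -> db = 3) ->
  1 <= da <= 4 -> 1 <= db <= 4 ->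
  E * (da * db) + (Av && Bx) * 4 + (Ax && Bv) * 4 + (Ax && By) * ((if Av then 1 else if Ax then 4 else da) * (if Bv then 1 else if Bx then 4 else db)) + (Ay && Bx) * ((if Av then 1 else if Ax then 4 else da) * (if Bv then 1 else if Bx then 4 else db))
    + Ax * (~~ Bv && E) + Bx * (~~ Av && E)
  <= [|| Av && Bx, Ax && Bv | (~~Av && ~~Bv && [|| E, Ax && By | Ay && Bx])] * ((if Av then 1 else if Ax then 4 else da) * (if Bv then 1 else if Bx then 4 else db)) + Av * (E * (da * db)) + Bv * (E * (da * db)).
Proof.
case: Av; case: Ax; case: Ay; case: Bv; case: Bx; case: By; case: E; rewrite //= => _;
  move=> *; nia.
Qed.

Lemma bool_m2_y (Av Ax Ay Bv Bx By E : bool) (da db : nat) :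
  [&& ~~ (Av && Ay), ~~ (Av && Ax), ~~ (Av && Ay), ~~ (Ax && Ay),
      ~~ (Bv && By), ~~ (Bv && Bx), ~~ (Bv && By), ~~ (Bx && By),
      (E ==> ~~ [|| Av && Bv, Ay && By, Ax && Bx, Ay && By, Ax && By | Ay && Bx]),
      (Av ==> (E == (Bx || By))) & (Bv ==> (E == (Ax || Ay)))] ->
  (Av -> da = 2) -> (Ay -> da = 3) -> (Bv -> db = 2) -> (By -> db = 3) ->
  1 <= da <= 4 -> 1 <= db <= 4 ->
  E * (da * db) + (Av && By) * 4 + (Ay && Bv) * 4 + (Ax && By) * ((if Av then 1 else if Ay then 4 else da) * (if Bv then 1 else if By then 4 else db)) + (Ay && Bx) * ((if Av then 1 else if Ay then 4 else da) * (if Bv then 1 else if By then 4 else db))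
    + Ay * (~~ Bv && E) + By * (~~ Av && E)
  <= [|| Av && By, Ay && Bv | (~~Av && ~~Bv && [|| E, Ax && By | Ay && Bx])] * ((if Av then 1 else if Ay then 4 else da) * (if Bv then 1 else if By then 4 else db)) + Av * (E * (da * db)) + Bv * (E * (da * db)).
Proof.
case: Av; case: Ax; case: Ay; case: Bv; case: Bx; case: By; case: E; rewrite //= => _;
  move=> *; nia.
Qed.

Lemma bool_deg (Uw Ux Uy Bv Bx By E Euv : bool) :
  [&& Bv ==> (E == Euv), Euv == (Ux || Uy), ~~ (Ux && Uy), ~~ (Bv && Bx), ~~ (Bv && By),
      ~~ (Bx && By), (Ux && By) ==> ~~ E & (Uy && Bx) ==> ~~ E] ->
  [|| false, Uw && Bv | ~~ false && ~~ Bv && [|| E, Ux && By | Uy && Bx]] + Bv * Euv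
  = Bv * Uw + E + By * Ux + Bx * Uy.
Proof.
by case: Uw; case: Ux; case: Uy; case: Bv; case: Bx; case: By; case: E; case: Euv.
Qed.


Lemma dsum_split n (F G : 'I_n -> 'I_n -> nat) :
  \sum_a \sum_b (F a b + G a b) = \sum_a \sum_b F a b + \sum_a \sum_b G a b.
Proof. rewrite -big_split; apply: eq_bigr => a _; by rewrite big_split. Qed.

Lemma dsum_pt n (i j : 'I_n) (F : 'I_n -> 'I_n -> nat) :
  \sum_a \sum_b ((a == i) && (b == j)) * F a b = F i j.
Proof.
rewrite (bigD1 i) //= [X in _ + X]big1 ?addn0; last first.
  move=> a /negbTE ->; by apply: big1.
rewrite (bigD1 j) //= [X in _ + X]big1 ?addn0; last first.
  move=> b /negbTE ->; by rewrite andbF.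
by rewrite !eqxx mul1n.
Qed.

Lemma dsum_row n (i : 'I_n) (F : 'I_n -> 'I_n -> nat) :
  \sum_a \sum_b (a == i) * F a b = \sum_b F i b.
Proof.
rewrite (bigD1 i) //= [X in _ + X]big1 ?addn0; last first.
  move=> a /negbTE ->; by apply: big1.
by apply: eq_bigr => b _; rewrite eqxx mul1n.
Qed.

Lemma dsum_col n (i : 'I_n) (F : 'I_n -> 'I_n -> nat) :
  \sum_a \sum_b (b == i) * F a b = \sum_a F a i.
Proof. by apply: eq_bigr => a _; rewrite sum_eq1'. Qed.

Lemma orb_nat (p q : bool) : ~~ (p && q) -> ((p || q) : nat) = p + q.
Proof. by case: p; case: q. Qed.

Ltac neq_contra := match goal with H : is_true (?z != ?z) |- _ => by rewrite eqxx in H end.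

Lemma cons0 n (e : rel 'I_n) v w x y a b :
  irreflexive e -> symmetric e -> (forall u, e v u = (u == x) || (u == y)) ->
  x != y -> x != v -> y != v -> v != w -> ~~ e x y ->
  [&& ~~ ((a == v) && (a == w)), ~~ ((a == v) && (a == x)), ~~ ((a == v) && (a == y)),
      ~~ ((a == x) && (a == y)),
      ~~ ((b == v) && (b == w)), ~~ ((b == v) && (b == x)), ~~ ((b == v) && (b == y)),
      ~~ ((b == x) && (b == y)),
      (e a b ==> ~~ [|| (a == v) && (b == v), (a == w) && (b == w), (a == x) && (b == x),
                     (a == y) && (b == y), (a == x) && (b == y) | (a == y) && (b == x)]),
      ((a == v) ==> (e a b == ((b == x) || (b == y)))) &
      ((b == v) ==> (e a b == ((a == x) || (a == y))))].
Proof.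
move=> eirr esym evE xy xv yv vw nxy.
repeat (apply/andP; split);
  try (apply/negP => /andP [/eqP ? /eqP ?]; subst; neq_contra).
- apply/implyP => eab; apply/negP => H.
  repeat (case/orP: H => H; [case/andP: H => /eqP ? /eqP ?; subst|]);
    try (by rewrite eirr in eab); try (by rewrite eab in nxy);
    try (by rewrite esym eab in nxy).
  case/andP: H => /eqP ? /eqP ?; subst; by rewrite esym eab in nxy.
- by apply/implyP => /eqP ->; rewrite evE.
- by apply/implyP => /eqP ->; rewrite esym evE.
Qed.


Definition trans_rel n (e : rel 'I_n) (v w x y : 'I_n) : rel 'I_n :=
  fun a b => [|| (a == v) && (b == w), (a == w) && (b == v) |
     ~~ (a == v) && ~~ (b == v) && [|| e a b, (a == x) && (b == y) | (a == y) && (b == x)]].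

Lemma ar1 d p q : d + (p + q) = true + 3 + p + q -> d = 4. Proof. lia. Qed.
Lemma ar2 d1 d2 p q : d1 + (p + q) = false + d2 + p + q -> d1 = d2. Proof. lia. Qed.
Lemma ar3 s1 s2 : s1 + 1 = s2 + 1 -> s1 = s2. Proof. lia. Qed.
Lemma ar4 k m : 2 * k = 2 * m -> k = m. Proof. lia. Qed.

Lemma ar5 a b : a + 3 = b + 7 -> b < a. Proof. lia. Qed.
Lemma arM2 m m' X Y dx dy cw : 1 <= dx <= 4 -> 1 <= dy <= 4 ->
  2 * m + 4 + 4 + X * Y + Y * X + cw + cw <= 2 * m' + (2 * dx + 2 * dy) + (2 * dx + 2 * dy) ->
  [\/ [/\ X = dx, Y = dy & cw = 3], [/\ X = 4, dx = 3, Y = dy & cw = 2] | [/\ X = dx, Y = 4, dy = 3 & cw = 2]] ->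
  m < m'.
Proof. move=> b1 b2 H [[? ? ?]|[? ? ? ?]|[? ? ? ?]]; subst; nia. Qed.

Lemma transform n b (e : rel 'I_n) (v w : 'I_n) :
  in_CT b e -> 1 < n -> deg e v = 2 -> deg e w = 3 ->
  exists e' : rel 'I_n, [/\ in_CT b e', M1 e < M1 e' & M2 e < M2 e'].
Proof.
move=> [[T d4] nb] n1 dv dw.
have [[eirr esym] [econ ecard]] := T.
have /cards2P [x [y [xy Nv]]] : #|[set u | e v u]| == 2 by rewrite -/(deg e v) dv.
have evE : forall u, e v u = (u == x) || (u == y).
  by move=> u; have := congr1 (fun A : {set 'I_n} => u \in A) Nv; rewrite !inE.
have vw : v != w by apply/eqP => H; move: dv; rewrite H dw.
have xv : x != v by apply/eqP => H; have := evE x; rewrite eqxx H eirr.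
have yv : y != v by apply/eqP => H; have := evE y; rewrite eqxx orbT H eirr.
have exv : e x v by rewrite esym evE eqxx.
have evy : e v y by rewrite evE eqxx orbT.
have nxy := no_triangle T exv evy xy xv yv.
have dpos : forall u, 0 < deg e u := fun u => deg_pos u T n1.
have ewv : e w v = (w == x) || (w == y) by rewrite esym evE.
pose e' := trans_rel e v w x y.
pose d' u := if u == v then 1 else if u == w then 4 else deg e u.
have deg'v : deg e' v = 1.
  rewrite deg_sum -(sum_eq1 w 1); apply: eq_bigr => c _.
  by rewrite /e' /trans_rel eqxx (negbTE vw) /= muln1; case: (c == w).
have deg'E : forall u, u != v -> deg e' u + e u v = (u == w) + deg e u + (u == x) + (u == y).
  move=> u uv.
  have H : forall c, e' u c + (c == v) * e u v =
      (c == v) * (u == w) + e u c + (c == y) * (u == x) + (c == x) * (u == y).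
    move=> c; rewrite /e' /trans_rel (negbTE uv); apply: bool_deg.
    repeat (apply/andP; split).
    - by apply/implyP => /eqP ->.
    - by rewrite esym evE.
    - by apply/negP => /andP [/eqP -> /eqP H]; rewrite H eqxx in xy.
    - by apply/negP => /andP [/eqP -> /eqP H]; rewrite H eqxx in xv.
    - by apply/negP => /andP [/eqP -> /eqP H]; rewrite H eqxx in yv.
    - by apply/negP => /andP [/eqP -> /eqP H]; rewrite H eqxx in xy.
    - apply/implyP => /andP [/eqP -> /eqP ->]; exact: nxy.
    - apply/implyP => /andP [/eqP -> /eqP ->]; by rewrite esym.
  transitivity (\sum_c (e' u c + (c == v) * e u v)).
    by rewrite big_split /= sum_eq1 (deg_sum e').
  rewrite (eq_bigr _ (fun c _ => H c)) !big_split /= !sum_eq1 -deg_sum.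
  by [].
have deg' : forall u, deg e' u = d' u.
  move=> u; rewrite /d'; case: (eqVneq u v) => [->|uv]; first exact: deg'v.
  have := deg'E u uv.
  have -> : (e u v : nat) = (u == x) + (u == y).
    rewrite esym evE orb_nat //; apply/negP => /andP [/eqP -> /eqP H]; by rewrite H eqxx in xy.
  case: (eqVneq u w) => [->|uw]; rewrite ?eqxx ?dw.
    exact: ar1.
  exact: ar2.
have e'irr : irreflexive e'.
  move=> a; rewrite /e' /trans_rel eirr.
  have := cons0 a a eirr esym evE xy xv yv vw nxy.
  move/andP => [c1 /andP [_ /andP [_ /andP [c4 _]]]].
  move: c1 c4; by case: (a == v); case: (a == w); case: (a == x); case: (a == y).
have e'sym : symmetric e'.
  move=> a c; rewrite /e' /trans_rel (esym c a).
  move: (a == v) (c == v) (a == w) (c == w) (a == x) (c == x) (a == y) (c == y) (e a c);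
    by do 9! case.
pose h u := if u == v then x else u.
have hE : forall a c, e a c -> connect e' (h a) (h c).
  move=> a c; rewrite /h; case: (eqVneq a v) => [->|av].
    rewrite evE => eac.
    have cv : c != v by case/orP: eac => /eqP ->.
    rewrite (negbTE cv); case/orP: eac => /eqP ->; first exact: connect0.
    apply: connect1; by rewrite /e' /trans_rel (negbTE xv) (negbTE yv) !eqxx /= !orbT.
  case: (eqVneq c v) => [->|cv].
    rewrite esym evE => eac.
    case/orP: eac => /eqP ->; first exact: connect0.
    apply: connect1; by rewrite /e' /trans_rel (negbTE xv) (negbTE yv) !eqxx /= !orbT.
  move=> eac; apply: connect1; by rewrite /e' /trans_rel (negbTE av) (negbTE cv) eac /= !orbT.
have e'vw : e' v w by rewrite /e' /trans_rel !eqxx.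
have wv : w != v by rewrite eq_sym.
have e'con : forall a c, connect e' a c.
  have hw : forall u, connect e' u (h u).
    move=> u; rewrite /h; case: (eqVneq u v) => [->|uv]; last exact: connect0.
    apply: (connect_trans (connect1 e'vw)).
    have := connect_map hE (econ w x); by rewrite /h (negbTE wv) (negbTE xv).
  move=> a c; apply: connect_trans (hw a) _; apply: connect_trans (connect_map hE (econ a c)) _.
  rewrite (sym_connect_sym e'sym); exact: hw.
have sumdeg : \sum_u deg e' u = \sum_u deg e u.
  have : \sum_u (deg e' u + (u == v) * 1) = \sum_u (deg e u + (u == w) * 1).
    apply: eq_bigr => u _; rewrite deg' /d'; case: (eqVneq u v) => [->|uv].
      by rewrite ?eqxx (negbTE vw) dv.
    case: (eqVneq u w) => [->|uw]; first by rewrite ?(negbTE uv) ?eqxx dw.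
    by rewrite ?(negbTE uv) ?(negbTE uw).
  rewrite !big_split /= !sum_eq1.
  exact: ar3.
have e'card : #|edges e'| = n.-1.
  have := handshake e'sym e'irr; rewrite sumdeg handshake // ecard.
  by move=> /ar4.
have e'CT : in_CT b e'.
  split; last first.
    rewrite -nb /nbranch; apply: eq_card => u; rewrite !inE deg' /d'.
    case: (eqVneq u v) => [->|uv]; first by rewrite dv.
    by case: (eqVneq u w) => [->|uw]; rewrite ?dw.
  split; first by split; [split; [exact: e'irr | exact: e'sym] | split; [exact: e'con | exact: e'card]].
  move=> u; rewrite deg' /d'; case: ifP => // _; case: ifP => // _.
have M1E : M1 e' + 3 = M1 e + 7.
  have : \sum_u (deg e' u ^ 2 + (u == v) * 3) = \sum_u (deg e u ^ 2 + (u == w) * 7).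
    apply: eq_bigr => u _; rewrite deg' /d'; case: (eqVneq u v) => [->|uv].
      by rewrite ?eqxx (negbTE vw) dv.
    case: (eqVneq u w) => [->|uw]; first by rewrite ?(negbTE uv) ?eqxx dw.
    by rewrite ?(negbTE uv) ?(negbTE uw).
  by rewrite !big_split /= !sum_eq1.
have S'E : \sum_a \sum_c e' a c * (d' a * d' c) = 2 * M2 e'.
  rewrite -(M2_sum e'sym e'irr); apply: eq_bigr => a _; apply: eq_bigr => c _; by rewrite !deg'.
have SE := M2_sum esym eirr.
have b1 : forall u, 1 <= deg e u <= 4 by move=> u; rewrite dpos d4.
have hv : forall u, u == v -> deg e u = 2 by move=> u /eqP ->.
have hw : forall u, u == w -> deg e u = 3 by move=> u /eqP ->.
have PW : forall a c,
  e a c * (deg e a * deg e c) + ((a == v) && (c == w)) * 4 + ((a == w) && (c == v)) * 4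
  + ((a == x) && (c == y)) * (d' a * d' c) + ((a == y) && (c == x)) * (d' a * d' c)
  + (a == w) * (~~ (c == v) && e a c) + (c == w) * (~~ (a == v) && e a c)
  <= e' a c * (d' a * d' c) + (a == v) * (e a c * (deg e a * deg e c))
     + (c == v) * (e a c * (deg e a * deg e c)).
  move=> a c; have C := cons0 a c eirr esym evE xy xv yv vw nxy.
  rewrite /e' /trans_rel /d'.
  case: (eqVneq w x) => [wx|wnx].
    have hw' : forall u, u == x -> deg e u = 3 by move=> u; rewrite -wx; exact: hw.
    rewrite wx in C *.
    exact: (bool_m2_x C (hv a) (hw' a) (hv c) (hw' c) (b1 a) (b1 c)).
  case: (eqVneq w y) => [wy|wny].
    have hw' : forall u, u == y -> deg e u = 3 by move=> u; rewrite -wy; exact: hw.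
    rewrite wy in C *.
    exact: (bool_m2_y C (hv a) (hw' a) (hv c) (hw' c) (b1 a) (b1 c)).
  have H1 : ~~ ((a == w) && (a == x)).
    by apply/negP => /andP [/eqP -> /eqP H]; rewrite H eqxx in wnx.
  have H2 : ~~ ((a == w) && (a == y)).
    by apply/negP => /andP [/eqP -> /eqP H]; rewrite H eqxx in wny.
  have H3 : ~~ ((c == w) && (c == x)).
    by apply/negP => /andP [/eqP -> /eqP H]; rewrite H eqxx in wnx.
  have H4 : ~~ ((c == w) && (c == y)).
    by apply/negP => /andP [/eqP -> /eqP H]; rewrite H eqxx in wny.
  exact: (bool_m2_0 C H1 H2 H3 H4 (hv a) (hw a) (hv c) (hw c) (b1 a) (b1 c)).
have Hs := @leq_sum _ (index_enum 'I_n) (fun _ => true) _ _ (fun a (_ : true) => @leq_sum _ (index_enum 'I_n) (fun _ => true) _ _ (fun c (_ : true) => PW a c)).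
rewrite !dsum_split !dsum_pt !dsum_row !dsum_col in Hs.
have rowv : \sum_c e v c * (deg e v * deg e c) = 2 * deg e x + 2 * deg e y.
  rewrite dv; transitivity (\sum_c ((c == x) * (2 * deg e c) + (c == y) * (2 * deg e c))).
    apply: eq_bigr => c _; rewrite evE -mulnDl orb_nat //.
    by apply/negP => /andP [/eqP -> /eqP H]; rewrite H eqxx in xy.
  by rewrite big_split /= !sum_eq1'.
have colv : \sum_a e a v * (deg e a * deg e v) = 2 * deg e x + 2 * deg e y.
  rewrite -rowv; apply: eq_bigr => a _; by rewrite esym (mulnC (deg e a)).
have cw1 : \sum_a ((a != v) && e a w) = \sum_c ((c != v) && e w c).
  by apply: eq_bigr => a _; rewrite esym.
have cwE : \sum_c ((c != v) && e w c) + e w v = 3.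
  transitivity (\sum_c ((c != v) && e w c) + \sum_c (c == v) * e w c); first by rewrite sum_eq1'.
  rewrite -big_split -dw deg_sum; apply: eq_bigr => c _.
  by case: (eqVneq c v) => [->|_] /=; case: (e w _).
rewrite SE S'E rowv colv cw1 /d' (negbTE xv) (negbTE yv) in Hs.
move: Hs cwE; rewrite ewv.
have key := arM2 (b1 x) (b1 y).
case: (eqVneq x w) => [xw|xnw].
  have ynw : y != w by rewrite -xw eq_sym.
  rewrite (negbTE ynw) /= => Hs cwE.
  exists e'; split => //; first by apply: ar5 M1E.
  apply: (arM2 (b1 x) (b1 y) Hs); apply: Or32; split => //; last by apply/eqP; rewrite -(eqn_add2r 1) cwE.
  by rewrite xw dw.
case: (eqVneq y w) => [yw|ynw].
  rewrite orbT => Hs cwE.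
  exists e'; split => //; first by apply: ar5 M1E.
  apply: (arM2 (b1 x) (b1 y) Hs); apply: Or33; split => //; last by apply/eqP; rewrite -(eqn_add2r 1) cwE.
  by rewrite yw dw.
move=> Hs cwE.
exists e'; split => //; first by apply: ar5 M1E.
apply: (arM2 (b1 x) (b1 y) Hs); apply: Or31; split => //; by rewrite -cwE addn0.
Qed.

Unset Implicit Arguments.

Theorem lemma9 (n b : nat) (e : rel 'I_n) :
  1 <= b -> 2 * b + 2 < n ->
  (is_max_CT b (@M1 n) e \/ is_max_CT b (@M2 n) e) ->
  (0 < n2 e <-> 3 * b + 2 < n).
Proof.
move=> b1 nb H.
have [CT maxP] : in_CT b e /\
    forall e' : rel 'I_n, in_CT b e' -> M1 e < M1 e' -> M2 e < M2 e' -> False.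
  case: H => [[CT Hm]|[CT Hm]]; split => // e' C' h1 h2.
    by have := Hm e' C'; rewrite leqNgt h1.
  by have := Hm e' C'; rewrite leqNgt h2.
have n1 : 1 < n by lia.
have [[T d4] nbE] := CT.
have [c1 c2] := count_deg T n1 d4.
rewrite nbE in c1 c2.
split; last by move=> H3; lia.
move=> n2pos; rewrite ltnNge; apply/negP => Hle.
case: (boolP [exists u, deg e u == 3]) => [/existsP [w /eqP dw]|].
  move: n2pos; rewrite /n2 card_gt0 => /set0Pn [v]; rewrite inE => /eqP dv.
  have [e' [C' h1 h2]] := transform CT n1 dv dw.
  exact: maxP C' h1 h2.
rewrite negb_exists => /forallP no3.
have := c2 no3; lia.
Qed.
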